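(* With the setup of the context, let $\mu$ be any weight on $F$. Then for every $x\in V(G)$ and $y\in V(H)$, $$\mathbb P_{F,\mu}(x\sim_F y)=\mathbb P_{G,\mu}(x\sim_G v^-)\,\mathbb P_{H_0,\mu}(v^-\sim_{H_0} y)+\mathbb P_{G,\mu}(x\sim_G v^+)\,\mathbb P_{H_0,\mu}(v^+\sim_{H_0} y)-\mathbb P_{G,\mu}(x\sim_G v^-\cap x\sim_G v^+)\,\mathbb P_{H_0,\mu}(v^-\sim_{H_0} y\cap v^+\sim_{H_0} y),$$ where $\mathbb P_{G,\mu}$ and $\mathbb P_{H_0,\mu}$ denote the percolation measures with respect to the restrictions of $\mu$ to $E(G)$ and $E(H_0)$ respectively.
   Context: All graphs are finite and simple. For a graph $G$, a weight is a function $\mu\colon E(G)\to[0,1]$; the associated edge-percolation probability space has sample space $\mathscr P(E(G))$, with $\mathbb P_{G,\mu}(X)=\prod_{e\in X}\mu(e)\prod_{e\notin X}(1-\mu(e))$ for $X\subseteq E(G)$ (edges independently open, edge $e$ with probability $\mu(e)$). For vertices $x,y$, $(x\sim_G y)$ is the event that $x$ and $y$ are joined by a path of open edges of $G$. The bunkbed graph $BB(G)=G\,\Box\,K_2$ has vertex set $V(G)\times\{0,1\}$, writing $x^-=(x,0)$, $x^+=(x,1)$, with edges $x^-y^-$ and $x^+y^+$ for every $xy\in E(G)$ and vertical edges $x^-x^+$ for every $x\in V(G)$. Setup: let $\overline F$ be a graph and $v\in V(\overline F)$ a cut vertex; let $V_1,\dots,V_k$ ($k\ge2$) be the vertex sets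 of the components of $\overline F\setminus\{v\}$, fix $I\subseteq\{1,\dots,k\}$, and set $\overline G=\overline F[\bigcup_{i\in I}V_i\cup\{v\}]$, $\overline H=\overline F[\bigcup_{i\notin I}V_i\cup\{v\}]$ (induced subgraphs). Let $F=BB(\overline F)$, $G=BB(\overline G)$, $H=BB(\overline H)$, regarded as subgraphs of $F$, and $H_0=H\setminus\{v^-v^+\}$ (the graph $H$ with the edge $v^-v^+$ removed); thus $E(F)$ is the disjoint union of $E(G)$ and $E(H_0)$. *)

(* Defs.v *)
From HB Require Import structures.
From mathcomp Require Import all_boot all_order all_algebra.
From mathcomp Require Import reals.
Set Implicit Arguments. Unset Strict Implicit. Unset Printing Implicit Defensive.
Import Order.TTheory GRing.Theory Num.Theory.
Local Open Scope ring_scope.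

Section Defs.
Variable T : finType.
Variable adj : rel T.

Definition simple_graph := symmetric adj /\ irreflexive adj.

Definition restr (W : {set T}) : rel T :=
  [rel a b | [&& adj a b, a \in W & b \in W]].

Definition components (W : {set T}) : {set {set T}} :=
  [set [set w in W | connect (restr W) u w] | u in W].

Definition cut_vertex (v : T) :=
  (#|components [set: T]| < #|components [set~ v]|)%N.

(* Bunkbed vertices: (x,false) = x^-, (x,true) = x^+ ; edges are 2-sets. *)
Definition bbE (W : {set T}) : {set {set (T * bool)}} :=
  [set e | [exists a, exists c, exists b : bool,
     [&& a \in W, c \in W, adj a c & e == [set (a, b); (c, b)]]]]
  :|: [set [set (a, false); (a, true)] | a in W].
End Defs.

(* x and y joined by a path of open edges (X = set of open edges) *)
Definition conn (V : finType) (x y : V) (X : {set {set V}}) : bool :=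
  connect [rel a b | [set a; b] \in X] x y.

Definition perc (V : finType) (R : realType) (E : {set {set V}})
  (mu : {set V} -> R) (A : pred {set {set V}}) : R :=
  \sum_(X in powerset E | A X)
     (\prod_(e in X) mu e * \prod_(e in E :\: X) (1 - mu e)).

(* Main.v *)
Require Import Defs.
From HB Require Import structures.
From mathcomp Require Import all_boot all_order all_algebra.
From mathcomp Require Import reals.
Import Order.TTheory GRing.Theory Num.Theory.
Set Implicit Arguments. Unset Strict Implicit. Unset Printing Implicit Defensive.
Lemma connect_inv (T : finType) (e : rel T) (P : pred T) x y :
  (forall a b, P a -> e a b -> P b) -> connect e x y -> P x -> P y.
Proof.
move=> H /connectP [p pth ->]; elim: p x pth => //= z p IH x /andP [exz pth] Px.
by apply: IH pth _; exact: H Px exz.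
Qed.

Section Abstract.
Variables (V : finType) (cG cH e : rel V) (gs hs : pred V) (x n p : V).
Hypotheses (cGr : reflexive cG) (cHr : reflexive cH)
  (cGt : forall a b c, cG a b -> cG b c -> cG a c)
  (cHt : forall a b c, cH a b -> cH b c -> cH a c)
  (cGs : forall a b, cG a b -> gs a -> gs b)
  (cHs : forall a b, cH a b -> hs a -> hs b)
  (hn : hs n) (hp : hs p) (gn : gs n) (gp : gs p) (gx : gs x)
  (inS : forall z, gs z -> hs z -> z = n \/ z = p)
  (estep : forall a b, e a b -> (cG a b /\ gs a) \/ (cH a b /\ hs a)).

Definition Pinv z := [|| cG x z, cG x n && cH n z, cG x p && cH p z,
   [&& cG x n, cH n p & cG p z] | [&& cG x p, cH p n & cG n z]].

Lemma Pinv_step a b : Pinv a -> e a b -> Pinv b.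
Proof.
move=> Pa /estep [[gab ga]|[hab ha]].
  move: Pa; rewrite /Pinv => /orP [h|/orP [h|/orP [h|/orP [h|h]]]].
  - by rewrite /Pinv (cGt h gab).
  - case/andP: h => h1 h2; have [ean|eap] := inS ga (cHs h2 hn); subst a.
      by rewrite /Pinv (cGt h1 gab).
    by rewrite /Pinv h1 h2 gab !orbT.
  - case/andP: h => h1 h2; have [ean|eap] := inS ga (cHs h2 hp); subst a.
      by rewrite /Pinv h1 h2 gab !orbT.
    by rewrite /Pinv (cGt h1 gab).
  - by case/and3P: h => h1 h2 h3; rewrite /Pinv h1 h2 (cGt h3 gab) !orbT.
  - by case/and3P: h => h1 h2 h3; rewrite /Pinv h1 h2 (cGt h3 gab) !orbT.
move: Pa; rewrite /Pinv => /orP [h|/orP [h|/orP [h|/orP [h|h]]]].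
- have [ean|eap] := inS (cGs h gx) ha; subst a.
    by rewrite /Pinv h hab !orbT.
  by rewrite /Pinv h hab !orbT.
- by case/andP: h => h1 h2; rewrite /Pinv h1 (cHt h2 hab) !orbT.
- by case/andP: h => h1 h2; rewrite /Pinv h1 (cHt h2 hab) !orbT.
- case/and3P: h => h1 h2 h3; have [ean|eap] := inS (cGs h3 gp) ha; subst a.
    by rewrite /Pinv h1 hab !orbT.
  by rewrite /Pinv h1 (cHt h2 hab) !orbT.
- case/and3P: h => h1 h2 h3; have [ean|eap] := inS (cGs h3 gn) ha; subst a.
    by rewrite /Pinv h1 (cHt h2 hab) !orbT.
  by rewrite /Pinv h1 hab !orbT.
Qed.

Lemma abstract_conn y : hs y -> connect e x y ->
  (cG x n && cH n y) || (cG x p && cH p y).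
Proof.
move=> hy cxy.
have : Pinv y by apply: (connect_inv Pinv_step cxy); rewrite /Pinv cGr.
rewrite /Pinv => /orP [h|/orP [h|/orP [h|/orP [h|h]]]].
- by case: (inS (cGs h gx) hy) => ey; subst y; rewrite h cHr ?orbT.
- by rewrite h.
- by rewrite h orbT.
- case/and3P: h => h1 h2 h3; case: (inS (cGs h3 gp) hy) => ey; subst y.
    by rewrite h1 cHr.
  by rewrite h1 h2.
- case/and3P: h => h1 h2 h3; case: (inS (cGs h3 gn) hy) => ey; subst y.
    by rewrite h1 h2 orbT.
  by rewrite h1 cHr orbT.
Qed.
End Abstract.
Section Graph.
Variables (T : finType) (adj : rel T) (Hs : simple_graph adj) (v : T)
  (I : {set {set T}}) (HI : I \subset components adj [set~ v]).

Definition comp w := [set w' in [set~ v] | connect (restr adj [set~ v]) w w'].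

Lemma restr_sym : symmetric (restr adj [set~ v]).
Proof.
move=> a b; rewrite /restr /= (proj1 Hs a b).
by case: (a \in _); case: (b \in _); rewrite /= ?andbF ?andbT.
Qed.

Lemma comp_eq u w : w \in comp u -> comp u = comp w.
Proof.
rewrite inE => /andP [_ cuw]; apply/setP => z; rewrite !inE.
by rewrite (same_connect (sym_connect_sym restr_sym) cuw).
Qed.

Lemma comp_in w : w != v -> w \in comp w.
Proof. by move=> h; rewrite inE in_setC1 h connect0. Qed.

Lemma comp_mem w : w != v -> comp w \in components adj [set~ v].
Proof. by move=> h; apply: imset_f; rewrite in_setC1. Qed.

Lemma components_eq C w : C \in components adj [set~ v] -> w \in C -> C = comp w.
Proof. by move=> /imsetP [u _ ->] h; exact: comp_eq. Qed.

Lemma in_bigcup (J : {set {set T}}) : J \subset components adj [set~ v] ->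
  forall w, (w \in \bigcup_(C in J) C) = (w != v) && (comp w \in J).
Proof.
move=> HJ w; apply/bigcupP/andP => [[C CJ wC]|[wv cJ]].
  have eC := components_eq (subsetP HJ _ CJ) wC.
  move: (wC); rewrite eC inE in_setC1 => /andP [wv _]; split => //.
  by rewrite -eC.
by exists (comp w) => //; apply: comp_in.
Qed.

Definition VGd := (\bigcup_(C in I) C) :|: [set v].
Definition VHd := (\bigcup_(C in components adj [set~ v] :\: I) C) :|: [set v].

Lemma inVG w : (w \in VGd) = (w == v) || (comp w \in I).
Proof. rewrite in_setU in_bigcup // in_set1. by case: (eqVneq w v) => /=; rewrite ?orbF ?orbT // ?andbT. Qed.

Lemma inVH w : (w \in VHd) = (w == v) || (comp w \notin I).
Proof.
rewrite in_setU in_bigcup ?subsetDl // in_set1 in_setD; case: eqP => //= /eqP wv.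
by rewrite comp_mem // andbT orbF.
Qed.

Lemma cover w : (w \in VGd) || (w \in VHd).
Proof. by rewrite inVG inVH; case: (w == v); case: (comp w \in I). Qed.

Lemma inter w : w \in VGd -> w \in VHd -> w = v.
Proof. by rewrite inVG inVH; case: eqP => //= _ ->. Qed.

Lemma vG : v \in VGd. Proof. by rewrite inVG eqxx. Qed.
Lemma vH : v \in VHd. Proof. by rewrite inVH eqxx. Qed.

Lemma adj_side a c : adj a c ->
  (a \in VGd) && (c \in VGd) || (a \in VHd) && (c \in VHd).
Proof.
move=> hac.
case: (eqVneq a v) => [->|av]; first by rewrite vG vH /=; exact: cover.
case: (eqVneq c v) => [->|cv]; first by rewrite vG vH /= !andbT; exact: cover.
have e : comp a = comp c.
  apply: comp_eq; rewrite inE in_setC1 cv /=; apply: connect1.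
  by rewrite /restr /= hac !in_setC1 av cv.
by rewrite !inVG !inVH (negbTE av) (negbTE cv) e /=; case: (comp c \in I).
Qed.

Definition vert (a : T) : {set T * bool} := [set (a, false); (a, true)].

Lemma bbE_h (W : {set T}) a c (b : bool) : a \in W -> c \in W -> adj a c ->
  [set (a, b); (c, b)] \in bbE adj W.
Proof.
move=> ha hc hac; rewrite /bbE inE; apply/orP; left; rewrite inE.
by apply/existsP; exists a; apply/existsP; exists c; apply/existsP; exists b;
  rewrite ha hc hac eqxx.
Qed.

Lemma bbE_v (W : {set T}) a : a \in W -> vert a \in bbE adj W.
Proof. by move=> ha; rewrite /bbE inE; apply/orP; right; apply: imset_f. Qed.

Lemma bbE_case (W : {set T}) e : e \in bbE adj W ->
  (exists a c b, [/\ a \in W, c \in W, adj a c & e = [set (a, b); (c, b)]])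
  \/ (exists2 a, a \in W & e = vert a).
Proof.
rewrite /bbE inE => /orP [|/imsetP [a aW ->]]; last by right; exists a.
rewrite inE => /existsP [a /existsP [c /existsP [b /and4P [? ? ? /eqP ->]]]].
by left; exists a, c, b.
Qed.

Lemma bbE_end (W : {set T}) (a b : T * bool) : [set a; b] \in bbE adj W -> a.1 \in W.
Proof.
have := set21 a b.
move=> h /bbE_case [[p [c [bb [hp hc _ E]]]]|[p hp E]]; rewrite E in h;
  by case/set2P: h => ->.
Qed.

Lemma bbE_end2 (W : {set T}) (a b : T * bool) : [set a; b] \in bbE adj W -> b.1 \in W.
Proof. by rewrite setUC; apply: bbE_end. Qed.

Lemma bbE_sub (W1 W2 : {set T}) : W1 \subset W2 -> bbE adj W1 \subset bbE adj W2.
Proof.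
move=> sW; apply/subsetP => e /bbE_case [[a [c [b [ha hc hac ->]]]]|[a ha ->]].
  by apply: bbE_h => //; apply: (subsetP sW).
by apply: bbE_v; apply: (subsetP sW).
Qed.

Lemma hne a c (b : bool) : [set (a, b); (c, b)] != vert v.
Proof.
apply/negP => /eqP E; rewrite /vert in E.
move: (set21 (v, false) (v, true)) (set22 (v, false) (v, true)).
rewrite -E => /set2P [[_ <-]|[_ <-]] /set2P [[]|[]] //.
Qed.

Lemma vne a : a != v -> vert a != vert v.
Proof.
move=> av; apply/negP => /eqP E; rewrite /vert in E.
move: (set21 (a, false) (a, true)); rewrite E => /set2P [[e]|[e]];
  by rewrite e eqxx in av.
Qed.

Lemma EF_split : bbE adj [set: T] = bbE adj VGd :|: (bbE adj VHd :\ vert v).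
Proof.
apply/eqP; rewrite eqEsubset; apply/andP; split; last first.
  by rewrite subUset !bbE_sub ?subsetT // (subset_trans (subsetDl _ _)) ?bbE_sub ?subsetT.
apply/subsetP => e /bbE_case [[a [c [b [_ _ hac ->]]]]|[a _ ->]].
  case/orP: (adj_side hac) => /andP [ha hc]; first by rewrite inE bbE_h.
  by rewrite in_setU in_setD1 (bbE_h _ ha hc hac) hne orbT.
case: (boolP (a \in VGd)) => ha; first by rewrite inE bbE_v.
have hH : a \in VHd by move: (cover a); rewrite (negbTE ha).
have av : a != v by apply: contraNneq ha => ->; exact: vG.
by rewrite in_setU in_setD1 (bbE_v hH) vne // orbT.
Qed.

Lemma EGH_disj : [disjoint bbE adj VGd & bbE adj VHd :\ vert v].
Proof.
rewrite disjoint_subset; apply/subsetP => e hG; apply/negP => /=; rewrite in_setD1 => /andP [ne hH].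
case: (bbE_case hH) => [[a [c [b [ha hc hac E]]]]|[a ha E]]; rewrite E in hG ne.
  have ea : a = v := inter (bbE_end hG) ha; have ec : c = v := inter (bbE_end2 hG) hc.
  by move: hac; rewrite ea ec (proj2 Hs).
by have ea : a = v := inter (bbE_end hG) ha; rewrite ea eqxx in ne.
Qed.
End Graph.
Local Open Scope ring_scope.
Ltac bclose := intros; repeat match goal with H : is_true true -> _ |- _ => specialize (H isT) end; congruence.

Section PercLemmas.
Variables (R : realType) (V : finType) (mu : {set V} -> R).

Lemma perc_ext (E : {set {set V}}) (P Q : pred {set {set V}}) :
  (forall X : {set {set V}}, X \subset E -> P X = Q X) -> perc E mu P = perc E mu Q.
Proof.
move=> H; rewrite /perc; apply: eq_bigl => X; rewrite powersetE.
by case: (boolP (X \subset E)) => //= h; rewrite H.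
Qed.

Lemma perc_or (E : {set {set V}}) (P Q : pred {set {set V}}) :
  perc E mu (fun X => P X || Q X) =
  perc E mu P + perc E mu Q - perc E mu (fun X => P X && Q X).
Proof.
rewrite /perc !big_mkcondr /= -big_split -sumrB /=.
by apply: eq_bigr => X _; case: (P X); case: (Q X) => /=; rewrite ?addrK ?subr0 ?addr0 ?add0r.
Qed.

Lemma prod_setU_disj (I : finType) (A B : {set I}) (F : I -> R) :
  [disjoint A & B] -> \prod_(i in A :|: B) F i = \prod_(i in A) F i * \prod_(i in B) F i.
Proof. by move=> d; rewrite -bigU //; apply: eq_bigl => i; rewrite !inE. Qed.

Definition wt (E X : {set {set V}}) :=
  \prod_(e in X) mu e * \prod_(e in E :\: X) (1 - mu e).

Lemma perc_prod (E1 E2 : {set {set V}}) (P Q : pred {set {set V}}) :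
  [disjoint E1 & E2] ->
  perc (E1 :|: E2) mu (fun X => P (X :&: E1) && Q (X :&: E2)) =
  perc E1 mu P * perc E2 mu Q.
Proof.
move=> dis.
rewrite /perc big_distrlr /= pair_big_dep /=.
rewrite (reindex_onto (fun p : {set {set V}} * {set {set V}} => p.1 :|: p.2)
   (fun X => (X :&: E1, X :&: E2))) /=; last first.
  by move=> X /andP [XE _]; rewrite -setIUr; apply/setIidPl; rewrite -powersetE.
have key : forall A B : {set {set V}}, A \subset E1 -> B \subset E2 ->
   ((A :|: B) :&: E1 = A) /\ ((A :|: B) :&: E2 = B).
  move=> A B hA hB; split; apply/setP => e; rewrite !inE;
  move: (subsetP hA e) (subsetP hB e) (disjointFr dis (x:=e)) (disjointFl dis (x:=e));
  by case: (e \in A); case: (e \in B); case: (e \in E1); case: (e \in E2) => //=; bclose.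
rewrite (eq_bigl (fun p : {set {set V}} * {set {set V}} =>
   [&& (p.1 \in powerset E1) && P p.1, p.2 \in powerset E2 & Q p.2])); last first.
  move=> [A B] /=.
  case: (boolP (A \subset E1)) => hA; case: (boolP (B \subset E2)) => hB.
  - have [-> ->] := key A B hA hB.
    by rewrite !powersetE eqxx andbT hA hB subUset (subset_trans hA (subsetUl _ _))
       (subset_trans hB (subsetUr _ _)) /= andbC.
  - rewrite !powersetE (negbTE hB) /= andbF.
    apply/negbTE/negP => /andP [_ /eqP [_ hh]]; move: hB; rewrite -hh.
    by rewrite subsetIr.
  - rewrite !powersetE (negbTE hA) /=.
    apply/negbTE/negP => /andP [_ /eqP [hh _]]; move: hA; rewrite -hh.
    by rewrite subsetIr.
  - rewrite !powersetE (negbTE hA) /=.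
    apply/negbTE/negP => /andP [_ /eqP [hh _]]; move: hA; rewrite -hh.
    by rewrite subsetIr.
apply: eq_bigr => [[A B]] /=.
move=> /andP [/andP [hA _] /andP [hB _]]; rewrite !powersetE in hA hB.
have dAB : [disjoint A & B] := disjointW hA hB dis.
have -> : (E1 :|: E2) :\: (A :|: B) = (E1 :\: A) :|: (E2 :\: B).
  apply/setP => e; rewrite !inE;
  move: (subsetP hA e) (subsetP hB e) (disjointFr dis (x:=e)) (disjointFl dis (x:=e));
  by case: (e \in A); case: (e \in B); case: (e \in E1); case: (e \in E2) => //=; bclose.
rewrite prod_setU_disj // prod_setU_disj; last exact: disjointW (subsetDl _ _) (subsetDl _ _) dis.
by rewrite mulrACA.
Qed.
End PercLemmas.

Lemma conn_mono (V : finType) (X Y : {set {set V}}) a b :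
  X \subset Y -> conn a b X -> conn a b Y.
Proof.
move=> XY; apply: connect_sub => c d h; apply: connect1; exact: (subsetP XY).
Qed.

Theorem lemma3p3 (R : realType) (T : finType) (adj : rel T)
  (Hsimple : simple_graph adj) (v : T) (Hcut : cut_vertex adj v)
  (Hk : (2 <= #|components adj [set~ v]|)%N)
  (I : {set {set T}}) (HI : I \subset components adj [set~ v])
  (mu : {set (T * bool)} -> R)
  (Hmu : forall e, e \in bbE adj [set: T] -> 0 <= mu e <= 1) :
  let VG := (\bigcup_(C in I) C) :|: [set v] in
  let VH := (\bigcup_(C in components adj [set~ v] :\: I) C) :|: [set v] in
  let EF := bbE adj [set: T] in
  let EG := bbE adj VG in
  let EH0 := bbE adj VH :\ [set (v, false); (v, true)] in
  forall x y : T * bool, x.1 \in VG -> y.1 \in VH ->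
  perc EF mu (conn x y) =
    perc EG mu (conn x (v, false)) * perc EH0 mu (conn (v, false) y)
  + perc EG mu (conn x (v, true)) * perc EH0 mu (conn (v, true) y)
  - perc EG mu (fun X => conn x (v, false) X && conn x (v, true) X)
    * perc EH0 mu (fun X => conn (v, false) y X && conn (v, true) y X).
Proof.
move=> VG VH EF EG EH0 x y hx hy.
have EFe : EF = EG :|: EH0 := EF_split Hsimple HI.
have dis : [disjoint EG & EH0] := EGH_disj Hsimple HI.
have EH0H : EH0 \subset bbE adj VH by apply: subsetDl.
pose n := (v, false); pose p := (v, true).
have key : forall X : {set {set T * bool}}, X \subset EG :|: EH0 -> conn x y X =
   (conn x n (X :&: EG) && conn n y (X :&: EH0))
   || (conn x p (X :&: EG) && conn p y (X :&: EH0)).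
  move=> X XE; apply/idP/idP; last first.
    by case/orP => /andP [h1 h2];
      apply: connect_trans (conn_mono (subsetIl X EG) h1) (conn_mono (subsetIl X EH0) h2).
  move=> cxy.
  apply: (@abstract_conn _ [rel a b | conn a b (X :&: EG)]
    [rel a b | conn a b (X :&: EH0)] [rel a b | [set a; b] \in X]
    [pred z | z.1 \in VG] [pred z | z.1 \in VH]) => //=.
  - by move=> a; apply: connect0.
  - by move=> a; apply: connect0.
  - by move=> a b c; apply: connect_trans.
  - by move=> a b c; apply: connect_trans.
  - move=> a b cab ha.
    apply: (@connect_inv _ _ [pred z : T * bool | z.1 \in VG] a b _ cab ha) => c d /= hc.
    by rewrite inE => /andP [_ /bbE_end2].
  - move=> a b cab ha.
    apply: (@connect_inv _ _ [pred z : T * bool | z.1 \in VH] a b _ cab ha) => c d /= hc.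
    by rewrite inE => /andP [_ /(subsetP EH0H) /bbE_end2].
  - by rewrite in_setU set11 orbT.
  - by rewrite in_setU set11 orbT.
  - by rewrite in_setU set11 orbT.
  - by rewrite in_setU set11 orbT.
  - move=> [z b] /= hG hH; have -> : z = v := inter Hsimple HI hG hH.
    by case: b; [right|left].
  - move=> a b hab; have := subsetP XE _ hab; rewrite in_setU => /orP [hG|hH].
      left; split; last exact: bbE_end hG.
      by apply: connect1; rewrite /= in_setI hab hG.
    right; split; last exact: bbE_end (subsetP EH0H _ hH).
    by apply: connect1; rewrite /= in_setI hab hH.
rewrite EFe (perc_ext mu (Q := fun X =>
   (conn x n (X :&: EG) && conn n y (X :&: EH0))
   || (conn x p (X :&: EG) && conn p y (X :&: EH0)))); last exact: key.
rewrite perc_or (perc_prod mu (conn x n) (conn n y) dis) (perc_prod mu (conn x p) (conn p y) dis).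
rewrite (perc_ext mu (E := EG :|: EH0) (P := fun X =>
   (conn x n (X :&: EG) && conn n y (X :&: EH0))
   && (conn x p (X :&: EG) && conn p y (X :&: EH0))) (Q := fun X =>
   (fun X => conn x n X && conn x p X) (X :&: EG) &&
   (fun X => conn n y X && conn p y X) (X :&: EH0))); last first.
  by move=> X _ /=; rewrite andbACA.
by rewrite (perc_prod mu (fun X => conn x n X && conn x p X) (fun X => conn n y X && conn p y X) dis).
Qed.
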